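(* Let $\mathcal P$ be a finite collection of prototiles. If the tiling system $\sigma:T(\mathcal P)\to T(\mathcal P)$ has a point of period $2$ (a point $x$ with $\sigma^2x=x\ne\sigma x$), then it has at least two fixed points.
   Context: A prototile is a finite nonempty subset of $\mathbb Z$ with minimum $0$. For a finite collection $\mathcal P=\{P_1,\dots,P_K\}$ of prototiles, a tiling of $\mathbb Z$ by $\mathcal P$ is an expression $\mathbb Z=\bigcup_j(t_j+P_{k_j})$ as a disjoint union of translates of prototiles; it corresponds to the point $x\in\{1,\dots,K\}^{\mathbb Z}$ with $x_i=k$ iff $i\in t_j+P_{k_j}$ for some $j$ with $k_j=k$. $T(\mathcal P)$ is the set of all such points and $\sigma$ is the shift $(\sigma x)_i=x_{i+1}$; $\sigma:T(\mathcal P)\to T(\mathcal P)$ is called a tiling system. *)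

(* Defs.v *)
From mathcomp Require Import all_boot all_order all_algebra.
Set Implicit Arguments. Unset Strict Implicit. Unset Printing Implicit Defensive.
Import Order.TTheory GRing.Theory Num.Theory.
Local Open Scope ring_scope.

(* A prototile: a finite nonempty subset of Z with minimum 0,
   represented by a (finite) sequence of integers. *)
Definition prototile (A : seq int) : Prop :=
  (0 \in A) /\ (forall p, p \in A -> 0 <= p).

(* A collection of K prototiles indexed by 'I_K (index k stands for the
   paper's k+1). *)
Definition prototile_collection (K : nat) (P : 'I_K -> seq int) : Prop :=
  forall k, prototile (P k).

(* A family of labelled tiles J (pairs (t,k) meaning the translate t + P_k)
   is a tiling of Z when every integer lies in exactly one tile of J. *)
Definition is_tiling (K : nat) (P : 'I_K -> seq int) (J : int * 'I_K -> Prop) : Prop :=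
  forall i : int, exists! tk : int * 'I_K, J tk /\ (i - tk.1) \in P tk.2.

Definition tiling_point (K : nat) (P : 'I_K -> seq int) (J : int * 'I_K -> Prop)
  (x : int -> 'I_K) : Prop :=
  forall (i : int) (k : 'I_K), x i = k <-> exists t : int, J (t, k) /\ (i - t) \in P k.

Definition TP (K : nat) (P : 'I_K -> seq int) (x : int -> 'I_K) : Prop :=
  exists J, is_tiling P J /\ tiling_point P J x.

Definition shift (K : nat) (x : int -> 'I_K) : int -> 'I_K := fun i => x (i + 1).

(* Main.v *)
Require Import Defs.
From mathcomp Require Import all_boot all_order all_algebra.
From mathcomp Require Import ring.
From Stdlib Require Import FunctionalExtensionality.
Import GRing.Theory.
Local Open Scope ring_scope.

Lemma fix_tiling (K : nat) (P : 'I_K -> seq int) J (x : int -> 'I_K) (c : 'I_K) :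
  is_tiling P J -> tiling_point P J x ->
  (forall i, x i = c \/ x (i - 1) = c) ->
  (forall i, x i = c -> x (i - 1) = c -> False) ->
  TP P (fun _ => c).
Proof.
move=> HJ Hx F1 F2.
have cover : forall i, exists t, (J (t, c) \/ J (t - 1, c)) /\ (i - t) \in P c.
  move=> i; case: (F1 i) => Hi.
    have [t [Ht Hp]] := (proj1 (Hx i c) Hi).
    by exists t; split; [left|].
  have [t [Ht Hp]] := (proj1 (Hx (i - 1) c) Hi).
  exists (t + 1); split; first by right; rewrite addrK.
  have -> : i - (t + 1) = i - 1 - t by ring.
  exact: Hp.
have uniqJ : forall i t s, J (t, c) -> (i - t) \in P c -> J (s, c) -> (i - s) \in P c -> t = s.
  move=> i t s Ht Hpt Hs Hps.
  have [tk [_ Hu]] := HJ i.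
  have E1 := Hu (t, c) (conj Ht Hpt).
  have E2 := Hu (s, c) (conj Hs Hps).
  by case: (etrans (esym E1) E2).
have A1 : forall i s, J (s, c) -> (i - s) \in P c -> x i = c.
  by move=> i s Hs Hp; apply/(Hx i c); exists s.
have A2 : forall i s, J (s - 1, c) -> (i - s) \in P c -> x (i - 1) = c.
  move=> i s Hs Hp; apply/(Hx (i - 1) c); exists (s - 1); split => //.
  have -> : i - 1 - (s - 1) = i - s by ring.
  exact: Hp.
exists (fun tk => tk.2 = c /\ (J (tk.1, c) \/ J (tk.1 - 1, c))); split.
  move=> i; have [t [Ht Hp]] := cover i.
  exists (t, c); split; first by split.
  move=> [s k] [[/= Hk Hs] Hp']; simpl in Hp'; subst k.
  case: Ht => Ht; case: Hs => Hs.
  - by rewrite (uniqJ i t s Ht Hp Hs Hp').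
  - by exfalso; apply: (F2 i); [apply: (A1 i t) | apply: (A2 i s)].
  - by exfalso; apply: (F2 i); [apply: (A1 i s) | apply: (A2 i t)].
  - have E : t - 1 = s - 1.
      apply: (uniqJ (i - 1)) => //.
        by have -> : i - 1 - (t - 1) = i - t by ring.
      by have -> : i - 1 - (s - 1) = i - s by ring.
    by move/(congr1 (fun z => z + 1)): E; rewrite !subrK => ->.
move=> i k; split.
  move=> <-; have [t [Ht Hp]] := cover i.
  by exists t.
by move=> [t [[/= Hk _] _]].
Qed.

Theorem mainTheorem5 (K : nat) (P : 'I_K -> seq int) :
  prototile_collection P ->
  (exists x : int -> 'I_K, TP P x /\ shift (shift x) = x /\ shift x <> x) ->
  exists x y : int -> 'I_K,
    TP P x /\ TP P y /\ shift x = x /\ shift y = y /\ x <> y.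
Proof.
move=> _ [x [[J [HJ Hx]] [H2 Hne]]].
set a := x 0; set b := x 1.
have Hper : forall i, x (i + 1 + 1) = x i.
  by move=> i; exact: (congr1 (fun f => f i) H2).
pose Q i := (x i = a /\ x (i + 1) = b) \/ (x i = b /\ x (i + 1) = a).
have up : forall i, Q i -> Q (i + 1).
  move=> i [[h1 h2]|[h1 h2]]; [right|left]; by rewrite Hper.
have down : forall i, Q (i + 1) -> Q i.
  move=> i [[h1 h2]|[h1 h2]]; [right|left]; by rewrite -(Hper i).
have HQ : forall i, Q i.
  elim/int_rect.
  - by left; split => //; rewrite add0r.
  - by move=> n IH; rewrite intS addrC; apply: up.
  - move=> n IH; apply: down.
    have -> : - (n.+1%:Z) + 1 = - (n%:Z) by rewrite intS; ring.
    exact: IH.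
clearbody a b.
have Hab : a <> b.
  move=> Eab; apply: Hne; apply: functional_extensionality => i.
  rewrite /shift; case: (HQ i) => [[h1 h2]|[h1 h2]]; congruence.
have Q' : forall i, (x (i - 1) = a /\ x i = b) \/ (x (i - 1) = b /\ x i = a).
  by move=> i; have := HQ (i - 1); rewrite /Q subrK.
exists (fun _ => a), (fun _ => b); split; [|split; [|split; [by []|split; [by []|]]]].
- apply: (@fix_tiling K P J x _ HJ Hx); move=> i; case: (Q' i) => [[h1 h2]|[h1 h2]];
    first [by left | by right | move=> h3 h4; apply: Hab; by [rewrite -h2 -h3 | rewrite -h1 -h4 | rewrite -h3 -h2 | rewrite -h4 -h1]].
- apply: (@fix_tiling K P J x _ HJ Hx); move=> i; case: (Q' i) => [[h1 h2]|[h1 h2]];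
    first [by left | by right | move=> h3 h4; apply: Hab; by [rewrite -h2 -h3 | rewrite -h1 -h4 | rewrite -h3 -h2 | rewrite -h4 -h1]].
- by move=> E; apply: Hab; exact: (congr1 (fun f => f 0) E).
Qed.
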